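(* Let $X$ be a transient random walk on $\mathbf{Z}^d$ and let $U(A):=\sum_{x\in A\cap\mathbf{Z}^d}g(0,x)$ for $A\subseteq\mathbf{R}^d$. Then $U(\mathcal{V}_{n+1})\le 4^dU(\mathcal{V}_n)$ for all integers $n\ge0$.
   Context: A random walk on $\mathbf{Z}^d$ is $X_n=X_0+\xi_1+\cdots+\xi_n$ with $\xi_1,\xi_2,\dots$ i.i.d. $\mathbf{Z}^d$-valued; $P^a$ denotes its law when $X_0=a$. Its Green function is $g(a,x):=\sum_{n\ge0}P^a\{X_n=x\}$, and transience means $g$ is finite. For $k\ge0$, $\mathcal{V}_k:=[-2^k,2^k)^d$. *)

(* Defs.v *)
From Stdlib Require Import Reals ZArith List Classical ClassicalEpsilon.
Import ListNotations.
Open Scope R_scope.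

Definition lsum {T : Type} (f : T -> R) (l : list T) : R :=
  fold_right (fun x acc => f x + acc) 0 l.

Definition partial_sums {T : Type} (A : T -> Prop) (f : T -> R) : R -> Prop :=
  fun s => exists l : list T, NoDup l /\ Forall A l /\ s = lsum f l.

Lemma partial_sums_nonempty {T : Type} (A : T -> Prop) (f : T -> R) :
  exists s, partial_sums A f s.
Proof. exists 0; exists nil; repeat split; constructor. Qed.

Definition summable {T : Type} (A : T -> Prop) (f : T -> R) : Prop :=
  bound (partial_sums A f).

(* Sum of a (nonnegative) family over a countable set A: the supremum of the
   finite partial sums; by convention 0 if these are unbounded (this case is
   excluded by the hypotheses wherever it matters). *)
Definition psum {T : Type} (A : T -> Prop) (f : T -> R) : R :=
  match excluded_middle_informative (summable A f) with
  | left H => proj1_sig (completeness _ H (partial_sums_nonempty A f))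
  | right _ => 0
  end.

Definition lattice (d : nat) (x : list Z) : Prop := length x = d.

Definition vsub (x y : list Z) : list Z :=
  map (fun ab => (fst ab - snd ab)%Z) (combine x y).

(* Law of the random walk with step distribution p (p y = P{xi_1 = y}):
   law p n a x = P^a{X_n = x}. *)
Fixpoint law (d : nat) (p : list Z -> R) (n : nat) (a x : list Z) : R :=
  match n with
  | O => if list_eq_dec Z.eq_dec x a then 1 else 0
  | S m => psum (lattice d) (fun y => law d p m a y * p (vsub x y))
  end.

Definition green (d : nat) (p : list Z -> R) (a x : list Z) : R :=
  psum (fun _ : nat => True) (fun n => law d p n a x).

Definition transient (d : nat) (p : list Z -> R) : Prop :=
  forall a x, lattice d a -> lattice d x ->
    summable (fun _ : nat => True) (fun n => law d p n a x).

(* The box V_k = [-2^k, 2^k)^d, as a subset of Z^d. *)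
Definition box (d k : nat) (x : list Z) : Prop :=
  lattice d x /\
  Forall (fun z => (- (2 ^ Z.of_nat k) <= z < 2 ^ Z.of_nat k)%Z) x.

Definition U (d : nat) (p : list Z -> R) (A : list Z -> Prop) : R :=
  psum (fun x => A x /\ lattice d x) (fun x => green d p (repeat 0%Z d) x).

Definition step_distribution (d : nat) (p : list Z -> R) : Prop :=
  (forall y, 0 <= p y) /\
  (forall y, p y <> 0 -> lattice d y) /\
  summable (lattice d) p /\ psum (lattice d) p = 1.

(* Main.v *)
Require Import Defs.
From Stdlib Require Import Reals ZArith List.
From Stdlib Require Import Lra Lia Classical ClassicalEpsilon.
Import ListNotations.
Open Scope R_scope.

Lemma lsum_nil {T} (f : T -> R) : lsum f [] = 0.
Proof. reflexivity. Qed.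
Lemma lsum_cons {T} (f : T -> R) x l : lsum f (x :: l) = f x + lsum f l.
Proof. reflexivity. Qed.
Lemma lsum_app {T} (f : T -> R) l1 l2 : lsum f (l1 ++ l2) = lsum f l1 + lsum f l2.
Proof. induction l1; simpl; rewrite ?lsum_nil, ?lsum_cons; [lra|]. rewrite IHl1; lra. Qed.
Lemma lsum_map {T U} (f : U -> R) (g : T -> U) l :
  lsum f (map g l) = lsum (fun x => f (g x)) l.
Proof. induction l; simpl; rewrite ?lsum_nil, ?lsum_cons; [lra|]. rewrite IHl; lra. Qed.
Lemma lsum_ext_in {T} (f g : T -> R) l :
  (forall x, In x l -> f x = g x) -> lsum f l = lsum g l.
Proof. induction l; intros H; rewrite ?lsum_nil, ?lsum_cons; [lra|].
  rewrite H, IHl; [lra| intros; apply H; simpl; auto | simpl; auto]. Qed.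
Lemma lsum_le {T} (f g : T -> R) l :
  (forall x, In x l -> f x <= g x) -> lsum f l <= lsum g l.
Proof. induction l; intros H; rewrite ?lsum_nil, ?lsum_cons; [lra|].
  assert (f a <= g a) by (apply H; simpl; auto).
  assert (lsum f l <= lsum g l) by (apply IHl; intros; apply H; simpl; auto). lra. Qed.
Lemma lsum_nonneg {T} (f : T -> R) l :
  (forall x, In x l -> 0 <= f x) -> 0 <= lsum f l.
Proof. induction l; intros H; rewrite ?lsum_nil, ?lsum_cons; [lra|].
  assert (0 <= f a) by (apply H; simpl; auto).
  assert (0 <= lsum f l) by (apply IHl; intros; apply H; simpl; auto). lra. Qed.
Lemma lsum_plus {T} (f g : T -> R) l :
  lsum (fun x => f x + g x) l = lsum f l + lsum g l.
Proof. induction l; rewrite ?lsum_nil, ?lsum_cons; [lra|]. rewrite IHl; lra. Qed.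
Lemma lsum_scal_r {T} (f : T -> R) c l :
  lsum (fun x => f x * c) l = lsum f l * c.
Proof. induction l; rewrite ?lsum_nil, ?lsum_cons; [lra|]. rewrite IHl; lra. Qed.
Lemma lsum_scal_l {T} (f : T -> R) c l :
  lsum (fun x => c * f x) l = c * lsum f l.
Proof. induction l; rewrite ?lsum_nil, ?lsum_cons; [lra|]. rewrite IHl; lra. Qed.
Lemma lsum_const {T} c (l : list T) : lsum (fun _ => c) l = INR (length l) * c.
Proof. induction l; rewrite ?lsum_nil, ?lsum_cons; simpl length; [simpl; lra|].
  rewrite IHl, S_INR; lra. Qed.
Lemma lsum_swap {T U} (F : T -> U -> R) l1 l2 :
  lsum (fun x => lsum (fun y => F x y) l2) l1 = lsum (fun y => lsum (fun x => F x y) l1) l2.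
Proof. induction l1; rewrite ?lsum_nil, ?lsum_cons.
  - symmetry. transitivity (lsum (fun _ : U => 0) l2).
    + apply lsum_ext_in; intros; reflexivity.
    + rewrite lsum_const; lra.
  - rewrite IHl1. rewrite <- lsum_plus. apply lsum_ext_in; intros; rewrite lsum_cons; lra. Qed.
Lemma lsum_In_le {T} (f : T -> R) l x :
  In x l -> (forall y, In y l -> 0 <= f y) -> f x <= lsum f l.
Proof. induction l; intros Hx H; [destruct Hx|]. rewrite lsum_cons. destruct Hx as [->|Hx].
  - assert (0 <= lsum f l) by (apply lsum_nonneg; intros; apply H; simpl; auto). lra.
  - assert (0 <= f a) by (apply H; simpl; auto).
    assert (f x <= lsum f l) by (apply IHl; auto; intros; apply H; simpl; auto). lra. Qed.

Lemma lsum_remove_le {T} (dec : forall x y : T, {x = y} + {x <> y}) (f : T -> R) l x :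
  (forall y, 0 <= f y) -> lsum f (remove dec x l) <= lsum f l.
Proof. intros H; induction l; cbn [remove]; [rewrite lsum_nil; lra|]. destruct (dec x a); rewrite ?lsum_cons.
  - specialize (H a); lra.
  - lra. Qed.
Lemma lsum_remove {T} (dec : forall x y : T, {x = y} + {x <> y}) (f : T -> R) l x :
  (forall y, 0 <= f y) -> In x l -> f x + lsum f (remove dec x l) <= lsum f l.
Proof. intros H; induction l; intros Hx; [destruct Hx|]. cbn [remove]. destruct (dec x a).
  - subst. rewrite lsum_cons. pose proof (lsum_remove_le dec f l a H). lra.
  - rewrite !lsum_cons. destruct Hx as [->|Hx]; [congruence|]. specialize (IHl Hx). lra. Qed.
Lemma lsum_incl {T} (dec : forall x y : T, {x = y} + {x <> y}) (f : T -> R) l1 l :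
  (forall y, 0 <= f y) -> NoDup l1 -> incl l1 l -> lsum f l1 <= lsum f l.
Proof. intros H N; revert l; induction N as [|x l1 Hx N IH]; intros l I.
  - rewrite lsum_nil; apply lsum_nonneg; auto.
  - rewrite lsum_cons. assert (In x l) by (apply I; simpl; auto).
    pose proof (lsum_remove dec f l x H H0).
    assert (lsum f l1 <= lsum f (remove dec x l)).
    { apply IH. intros y Hy. apply in_in_remove; [congruence|]. apply I; simpl; auto. }
    lra. Qed.

Lemma psum_lub_gen {T} (A : T -> Prop) f M :
  (forall l, NoDup l -> Forall A l -> lsum f l <= M) -> summable A f /\ psum A f <= M.
Proof. intros H. assert (Hs : summable A f).
  { exists M. intros s [l [Hl [Hf ->]]]. auto. }
  split; auto. unfold psum. destruct (excluded_middle_informative (summable A f)) as [h|h]; [|contradiction].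
  destruct (completeness _ h _) as [s [Hub Hlub]]. simpl. apply Hlub.
  intros s' [l [? [? ->]]]; auto. Qed.
Lemma psum_ub {T} (A : T -> Prop) f l :
  summable A f -> NoDup l -> Forall A l -> lsum f l <= psum A f.
Proof. intros Hs Hn Hf. unfold psum. destruct (excluded_middle_informative (summable A f)) as [h|h]; [|contradiction].
  destruct (completeness _ h _) as [s [Hub Hlub0]]. simpl. apply Hub. exists l; auto. Qed.
Lemma psum_nonneg {T} (A : T -> Prop) f : (forall x, 0 <= f x) -> 0 <= psum A f.
Proof. intros H. unfold psum. destruct (excluded_middle_informative (summable A f)) as [h|h]; [|lra].
  destruct (completeness _ h _) as [s [Hub Hlub0]]. simpl. apply Hub. exists nil.
  split; [constructor|split; [constructor|reflexivity]]. Qed.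
Lemma summable_le {T} (A : T -> Prop) f g :
  (forall x, f x <= g x) -> summable A g -> summable A f.
Proof. intros H [m Hm]. exists m. intros s [l [? [? ->]]].
  apply Rle_trans with (lsum g l); [apply lsum_le; auto|]. apply Hm; exists l; auto. Qed.
Lemma psum_le {T} (A : T -> Prop) f g :
  (forall x, f x <= g x) -> summable A g -> psum A f <= psum A g.
Proof. intros H Hg. apply psum_lub_gen. intros l Hl Hf.
  apply Rle_trans with (lsum g l); [apply lsum_le; auto| apply psum_ub; auto]. Qed.
Lemma psum_eq_of {T} (A : T -> Prop) f g :
  (forall s, partial_sums A f s -> partial_sums A g s) ->
  (forall s, partial_sums A g s -> partial_sums A f s) -> psum A f = psum A g.
Proof. intros H1 H2. unfold psum.
  destruct (excluded_middle_informative (summable A f)) as [hf|hf];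
  destruct (excluded_middle_informative (summable A g)) as [hg|hg].
  - destruct (completeness _ hf _) as [sf [Uf Lf]]. destruct (completeness _ hg _) as [sg [Ug Lg]].
    simpl. apply Rle_antisym.
    + apply Lf. intros s Hs. apply Ug, H1, Hs.
    + apply Lg. intros s Hs. apply Uf, H2, Hs.
  - exfalso; apply hg. destruct hf as [m Hm]. exists m. intros s Hs; apply Hm, H2, Hs.
  - exfalso; apply hf. destruct hg as [m Hm]. exists m. intros s Hs; apply Hm, H1, Hs.
  - reflexivity. Qed.
Lemma psum_ext_in {T} (A : T -> Prop) f g :
  (forall x, A x -> f x = g x) -> psum A f = psum A g.
Proof. intros H. apply psum_eq_of; intros s [l [Hn [Hf ->]]]; exists l; split; auto; split; auto;
  apply lsum_ext_in; intros x Hx; rewrite Forall_forall in Hf; rewrite H; auto. Qed.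
Lemma psum_invol {T} (A : T -> Prop) f (phi : T -> T) :
  (forall x, A x -> A (phi x)) -> (forall x, A x -> phi (phi x) = x) ->
  psum A f = psum A (fun x => f (phi x)).
Proof. intros HA Hi.
  assert (Hnd : forall l, NoDup l -> Forall A l -> NoDup (map phi l)).
  { intros l Hn Hf. apply NoDup_map_NoDup_ForallPairs; auto. intros x y Hx Hy E.
    rewrite Forall_forall in Hf. rewrite <- (Hi x), <- (Hi y); auto; congruence. }
  assert (Hfa : forall l, Forall A l -> Forall A (map phi l)).
  { intros l Hf. rewrite Forall_forall in *. intros y Hy. apply in_map_iff in Hy.
    destruct Hy as [x [<- Hx]]. auto. }
  apply psum_eq_of; intros s [l [Hn [Hf ->]]]; exists (map phi l); split; auto; split; auto;
    rewrite lsum_map; auto.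
  apply lsum_ext_in. intros x Hx. rewrite Forall_forall in Hf. rewrite Hi; auto. Qed.

Lemma psum_add_ge {T} (dec : forall x y : T, {x = y} + {x <> y}) (A : T -> Prop) f g :
  (forall x, 0 <= f x) -> (forall x, 0 <= g x) -> summable A (fun x => f x + g x) ->
  psum A f + psum A g <= psum A (fun x => f x + g x).
Proof. intros Hf Hg Hs.
  assert (psum A f <= psum A (fun x => f x + g x) - psum A g); [|lra].
  apply psum_lub_gen. intros l1 N1 F1.
  assert (psum A g <= psum A (fun x => f x + g x) - lsum f l1); [|lra].
  apply psum_lub_gen. intros l2 N2 F2.
  set (L := nodup dec (l1 ++ l2)).
  assert (NL : NoDup L) by apply NoDup_nodup.
  assert (FL : Forall A L).
  { rewrite Forall_forall in *. intros x Hx. apply nodup_In in Hx. apply in_app_or in Hx.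
    destruct Hx; auto. }
  assert (lsum f l1 <= lsum f L).
  { apply (lsum_incl dec); auto. intros x Hx. apply nodup_In, in_or_app; auto. }
  assert (lsum g l2 <= lsum g L).
  { apply (lsum_incl dec); auto. intros x Hx. apply nodup_In, in_or_app; auto. }
  assert (lsum (fun x => f x + g x) L <= psum A (fun x => f x + g x)) by (apply psum_ub; auto).
  rewrite lsum_plus in H1. lra. Qed.

Lemma psum_lsum_ge {T U} (dec : forall x y : T, {x = y} + {x <> y}) (A : T -> Prop)
  (F : U -> T -> R) (L : list U) :
  (forall i x, 0 <= F i x) -> summable A (fun x => lsum (fun i => F i x) L) ->
  lsum (fun i => psum A (F i)) L <= psum A (fun x => lsum (fun i => F i x) L).
Proof. intros H. induction L as [|i L IH]; intros Hs.
  - rewrite lsum_nil. apply psum_nonneg. intros; rewrite lsum_nil; lra.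
  - rewrite lsum_cons.
    assert (Hs' : summable A (fun x => lsum (fun i => F i x) L)).
    { apply summable_le with (2 := Hs). intros x. rewrite lsum_cons. specialize (H i x); lra. }
    specialize (IH Hs').
    pose proof (psum_add_ge dec A (F i) (fun x => lsum (fun i => F i x) L) (H i)
      (fun x => lsum_nonneg _ _ (fun j _ => H j x)) Hs).
    apply Rle_trans with (psum A (fun x => F i x + lsum (fun i => F i x) L)); [lra| right; reflexivity].
Qed.

Definition vadd (x y : list Z) : list Z :=
  map (fun ab => (fst ab + snd ab)%Z) (combine x y).

Lemma vsub_cons a x b y : vsub (a :: x) (b :: y) = (a - b)%Z :: vsub x y.
Proof. reflexivity. Qed.
Lemma vadd_cons a x b y : vadd (a :: x) (b :: y) = (a + b)%Z :: vadd x y.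
Proof. reflexivity. Qed.
Lemma vsub_nil_l y : vsub [] y = [].
Proof. reflexivity. Qed.

Lemma vsub_length x y : length x = length y -> length (vsub x y) = length x.
Proof. revert y; induction x; destruct y; intros H; cbn [length] in H; try discriminate; auto.
  rewrite vsub_cons; cbn [length]; auto. Qed.
Lemma vadd_length x y : length x = length y -> length (vadd x y) = length x.
Proof. revert y; induction x; destruct y; intros H; cbn [length] in H; try discriminate; auto.
  rewrite vadd_cons; cbn [length]; auto. Qed.

Lemma vsub_invol x u : length x = length u -> vsub x (vsub x u) = u.
Proof. revert u; induction x; destruct u; intros H; cbn [length] in H; try discriminate; auto.
  rewrite !vsub_cons, IHx by auto. f_equal; lia. Qed.
Lemma vsub_vsub y c u : length y = length c -> length c = length u ->
  vsub (vsub y c) u = vsub y (vadd c u).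
Proof. revert c u; induction y; destruct c; destruct u; intros H1 H2; cbn [length] in H1, H2; try discriminate; auto.
  rewrite !vsub_cons, vadd_cons, vsub_cons, IHy by auto. f_equal; lia. Qed.
Lemma vsub_zero y : vsub y (repeat 0%Z (length y)) = y.
Proof. induction y; auto. cbn [length repeat]. rewrite vsub_cons, IHy; f_equal; lia. Qed.
Lemma vsub_eq_zero y c : length y = length c -> vsub y c = repeat 0%Z (length y) -> y = c.
Proof. revert c; induction y; destruct c; intros H1 H2; cbn [length repeat] in H1, H2; try discriminate; auto.
  rewrite vsub_cons in H2. injection H2; intros. f_equal; [lia|]. apply IHy; auto. Qed.
Lemma vsub_inj y y' z : length y = length z -> length y' = length z ->
  vsub y z = vsub y' z -> y = y'.
Proof. revert y' z; induction y as [|a y IH]; intros [|b y'] [|c z] H1 H2 H3; cbn [length] in H1, H2;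
  try discriminate; auto.
  rewrite !vsub_cons in H3. injection H3; intros. f_equal; [lia|]. apply (IH y' z); auto; lia. Qed.

Lemma law_nonneg d p (Hp0 : forall y, 0 <= p y) k a x : 0 <= law d p k a x.
Proof. revert x; induction k; intros x; simpl.
  - destruct (list_eq_dec Z.eq_dec x a); lra.
  - apply psum_nonneg. intros y. apply Rmult_le_pos; auto. Qed.

Lemma green_nonneg d p (Hp0 : forall y, 0 <= p y) a x : 0 <= green d p a x.
Proof. apply psum_nonneg. intros; apply law_nonneg; auto. Qed.

Lemma law_succ_rev d p k a x : lattice d x ->
  law d p (S k) a x = psum (lattice d) (fun u => law d p k a (vsub x u) * p u).
Proof. intros Hx. simpl.
  rewrite (psum_invol (lattice d) _ (fun u => vsub x u)).
  - apply psum_ext_in. intros u Hu. rewrite vsub_invol; auto. unfold lattice in *; congruence.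
  - intros u Hu. unfold lattice in *. rewrite vsub_length; congruence.
  - intros u Hu. apply vsub_invol. unfold lattice in *; congruence. Qed.

Lemma key d p (Hp : step_distribution d p) (Htr : transient d p) (Ss : list (list Z)) M :
  Forall (lattice d) Ss -> 0 <= M ->
  (forall z, In z Ss -> lsum (fun y => green d p (repeat 0%Z d) (vsub y z)) Ss <= M) ->
  lsum (fun y => green d p (repeat 0%Z d) y) Ss <= M.
Proof.
  intros HS HM Hz.
  destruct Hp as [Hp0 [Hpl [Hps Hp1]]].
  set (o := repeat 0%Z d) in *.
  assert (Ho : lattice d o) by (unfold o, lattice; apply repeat_length).
  rewrite Forall_forall in HS.
  set (fN := fun N a => lsum (fun y => lsum (fun k => law d p k o (vsub y a)) (seq 0 N)) Ss).
  assert (Hlat : forall y a, lattice d y -> lattice d a -> lattice d (vsub y a)).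
  { unfold lattice; intros; rewrite vsub_length; congruence. }
  assert (Hlatadd : forall y a, lattice d y -> lattice d a -> lattice d (vadd y a)).
  { unfold lattice; intros; rewrite vadd_length; congruence. }
  assert (Hpart : forall N x, lattice d x -> lsum (fun k => law d p k o x) (seq 0 N) <= green d p o x).
  { intros N x Hx. apply psum_ub. apply Htr; auto. apply seq_NoDup. rewrite Forall_forall; auto. }
  assert (Hsum_pM : summable (lattice d) (fun u => M * p u) /\ psum (lattice d) (fun u => M * p u) <= M).
  { apply psum_lub_gen. intros l Hn Hf. rewrite lsum_scal_l.
    pose proof (psum_ub _ p l Hps Hn Hf) as H. rewrite Hp1 in H.
    apply Rmult_le_compat_l with (r:=M) in H; auto. lra. }
  destruct Hsum_pM as [HsM HpM].
  assert (Claim : forall N a, lattice d a -> fN N a <= M).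
  { induction N as [|N IH]; intros a Ha.
    - unfold fN. simpl seq. apply Rle_trans with (lsum (fun _ : list Z => 0) Ss).
      + apply lsum_le; intros; rewrite lsum_nil; lra.
      + rewrite lsum_const; lra.
    - destruct (in_dec (list_eq_dec Z.eq_dec) a Ss) as [Hin|Hnin].
      + apply Rle_trans with (2 := Hz a Hin). apply lsum_le. intros y Hy. apply Hpart.
        apply Hlat; auto.
      + set (H := fun u => lsum (fun y => lsum (fun k => law d p k o (vsub y (vadd a u)) * p u) (seq 0 N)) Ss).
        assert (EH : forall u, H u = fN N (vadd a u) * p u).
        { intros u. unfold H, fN. rewrite <- lsum_scal_r. apply lsum_ext_in; intros. apply lsum_scal_r. }
        assert (HHM : forall u, H u <= M * p u).
        { intros u. rewrite EH. destruct (Req_dec (p u) 0) as [E|E].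
          - rewrite E; lra.
          - apply Rmult_le_compat_r; auto. }
        assert (HsH : summable (lattice d) H) by (apply summable_le with (2 := HsM); auto).
        assert (E1 : fN (S N) a = lsum (fun y => lsum (fun k => psum (lattice d)
                   (fun u => law d p k o (vsub y (vadd a u)) * p u)) (seq 0 N)) Ss).
        { unfold fN. apply lsum_ext_in. intros y Hy.
          assert (Ly : length y = d) by (apply HS; auto).
          replace (seq 0 (S N)) with (0%nat :: map S (seq 0 N)) by (rewrite seq_shift; reflexivity). rewrite lsum_cons, lsum_map.
          assert (E0 : law d p 0 o (vsub y a) = 0).
          { simpl. destruct (list_eq_dec Z.eq_dec (vsub y a) o) as [e|e]; auto.
            exfalso. apply Hnin. assert (y = a) as <-; auto.
            apply vsub_eq_zero. unfold lattice in Ha; congruence.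
            rewrite e. unfold o. rewrite Ly. reflexivity. }
          rewrite E0, Rplus_0_l. apply lsum_ext_in. intros k _.
          rewrite law_succ_rev by (apply Hlat; auto). apply psum_ext_in. intros u Hu.
          rewrite vsub_vsub; auto; unfold lattice in *; congruence. }
        rewrite E1.
        apply Rle_trans with (lsum (fun y => psum (lattice d) (fun u =>
                 lsum (fun k => law d p k o (vsub y (vadd a u)) * p u) (seq 0 N))) Ss).
        { apply lsum_le. intros y Hy.
          apply (psum_lsum_ge (list_eq_dec Z.eq_dec) (lattice d)
                   (fun k u => law d p k o (vsub y (vadd a u)) * p u)).
          - intros; apply Rmult_le_pos; auto using law_nonneg.
          - apply summable_le with (2 := HsH). intros u. unfold H.
            apply (lsum_In_le (fun y => lsum (fun k => law d p k o (vsub y (vadd a u)) * p u) (seq 0 N)) Ss y Hy).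
            intros; apply lsum_nonneg; intros; apply Rmult_le_pos; auto using law_nonneg. }
        apply Rle_trans with (psum (lattice d) H).
        { apply (psum_lsum_ge (list_eq_dec Z.eq_dec) (lattice d)
             (fun y u => lsum (fun k => law d p k o (vsub y (vadd a u)) * p u) (seq 0 N))).
          - intros; apply lsum_nonneg; intros; apply Rmult_le_pos; auto using law_nonneg.
          - exact HsH. }
        apply Rle_trans with (psum (lattice d) (fun u => M * p u)); [apply psum_le; auto | auto]. }
  assert (B : summable (fun _ : nat => True) (fun n => lsum (fun y => law d p n o y) Ss) /\
              psum (fun _ => True) (fun n => lsum (fun y => law d p n o y) Ss) <= M).
  { apply psum_lub_gen. intros L Hn _.
    set (N := S (list_max L)).
    apply Rle_trans with (lsum (fun n => lsum (fun y => law d p n o y) Ss) (seq 0 N)).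
    { apply (lsum_incl Nat.eq_dec).
      - intros; apply lsum_nonneg; intros; apply law_nonneg; auto.
      - auto.
      - intros k Hk. apply in_seq. split; [lia|].
        assert (Hf : Forall (fun k => (k <= list_max L)%nat) L) by (apply list_max_le; lia).
        rewrite Forall_forall in Hf. specialize (Hf k Hk). unfold N. lia. }
    rewrite lsum_swap. apply Rle_trans with (fN N o); [right | apply Claim; auto].
    unfold fN; apply lsum_ext_in; intros y Hy; apply lsum_ext_in; intros.
    assert (Ly : length y = d) by (apply HS; auto).
    unfold o. rewrite <- Ly, vsub_zero. reflexivity. }
  destruct B as [Bs Bp].
  apply Rle_trans with (2 := Bp). unfold green.
  apply (psum_lsum_ge Nat.eq_dec (fun _ => True) (fun y n => law d p n o y)); auto.
  intros; apply law_nonneg; auto.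
Qed.

Fixpoint lists_over (Rg : list Z) (d : nat) : list (list Z) :=
  match d with
  | O => [[]]
  | S d' => flat_map (fun a => map (cons a) (lists_over Rg d')) Rg
  end.

Lemma lists_over_In Rg d x : length x = d -> Forall (fun z => In z Rg) x -> In x (lists_over Rg d).
Proof. revert x; induction d; intros [|a x] H1 H2; simpl in H1; try discriminate.
  - simpl; auto.
  - inversion H2; subst. simpl. apply in_flat_map. exists a. split; auto. apply in_map. apply IHd; auto. Qed.

Lemma flat_cons_length (Rg : list Z) (L : list (list Z)) :
  length (flat_map (fun a => map (cons a) L) Rg) = (length Rg * length L)%nat.
Proof. induction Rg; simpl; auto. rewrite length_app, length_map, IHRg. lia. Qed.

Lemma lists_over_length Rg d : length (lists_over Rg d) = (length Rg ^ d)%nat.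
Proof. induction d; simpl; auto. rewrite flat_cons_length, IHd. reflexivity. Qed.

Lemma lsum_partition {T U} (decU : forall x y : U, {x = y} + {x <> y}) (f : T -> R)
  (idx : T -> U) (l : list T) (C : list U) :
  (forall x, 0 <= f x) -> (forall x, In x l -> In (idx x) C) ->
  lsum f l <= lsum (fun c => lsum f (filter (fun y => if decU (idx y) c then true else false) l)) C.
Proof. intros Hf. induction l as [|x l IH]; intros HC.
  - rewrite lsum_nil. apply lsum_nonneg. intros; apply lsum_nonneg; auto.
  - rewrite lsum_cons.
    transitivity (lsum (fun c => (if decU (idx x) c then f x else 0) +
          lsum f (filter (fun y => if decU (idx y) c then true else false) l)) C).
    + rewrite lsum_plus.
      assert (f x <= lsum (fun c => if decU (idx x) c then f x else 0) C).
      { pose proof (lsum_In_le (fun c => if decU (idx x) c then f x else 0) C (idx x)) as K.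
        cbv beta in K.
        assert (Ei : (if decU (idx x) (idx x) then f x else 0) = f x) by (destruct (decU (idx x) (idx x)); congruence).
        rewrite Ei in K. apply K.
        - apply HC; simpl; auto.
        - intros; destruct (decU (idx x) y); auto; lra. }
      assert (lsum f l <= lsum (fun c => lsum f (filter (fun y => if decU (idx y) c then true else false) l)) C)
        by (apply IH; intros; apply HC; simpl; auto).
      lra.
    + right. apply lsum_ext_in. intros c _. simpl filter.
      destruct (decU (idx x) c); rewrite ?lsum_cons; lra. Qed.

Definition cidx (P : Z) (y : list Z) : list Z := map (fun a => ((a + 2 * P) / P)%Z) y.

Lemma coord_piece (P a b : Z) : (0 < P)%Z -> (-(2*P) <= a < 2*P)%Z -> (-(2*P) <= b < 2*P)%Z ->
  ((a + 2*P)/P = (b+2*P)/P)%Z -> (-P <= a - b < P)%Z.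
Proof. intros HP Ha Hb E.
  pose proof (Z.div_mod (a+2*P) P ltac:(lia)) as Da.
  pose proof (Z.div_mod (b+2*P) P ltac:(lia)) as Db.
  pose proof (Z.mod_pos_bound (a+2*P) P HP).
  pose proof (Z.mod_pos_bound (b+2*P) P HP).
  rewrite E in Da. set (q := ((b + 2 * P) / P)%Z) in *. nia. Qed.

Lemma coord_idx (P a : Z) : (0 < P)%Z -> (-(2*P) <= a < 2*P)%Z -> In ((a + 2*P)/P)%Z [0;1;2;3]%Z.
Proof. intros HP Ha.
  assert (0 <= (a + 2*P)/P)%Z by (apply Z.div_pos; lia).
  assert ((a + 2*P)/P < 4)%Z by (apply Z.div_lt_upper_bound; lia).
  assert (((a + 2*P)/P = 0 \/ (a + 2*P)/P = 1 \/ (a + 2*P)/P = 2 \/ (a + 2*P)/P = 3)%Z) by lia.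
  destruct H1 as [E|[E|[E|E]]]; rewrite E; simpl; auto. Qed.

Lemma piece_vsub P y z : (0 < P)%Z -> length y = length z ->
  Forall (fun a => (-(2*P) <= a < 2*P)%Z) y -> Forall (fun a => (-(2*P) <= a < 2*P)%Z) z ->
  cidx P y = cidx P z -> Forall (fun a => (-P <= a < P)%Z) (vsub y z).
Proof. intros HP; revert z; induction y as [|a y IH]; intros [|b z] H1 H2 H3 H4;
  cbn [length] in H1; try discriminate.
  - constructor.
  - rewrite vsub_cons. inversion H2; inversion H3; subst. unfold cidx in H4; simpl in H4.
    injection H4; intros. constructor.
    + apply coord_piece; auto.
    + apply IH; auto. Qed.

Theorem proposition6p2 (d : nat) (p : list Z -> R)
  (Hp : step_distribution d p) (Htr : transient d p) :
  forall n : nat, U d p (box d (S n)) <= 4 ^ d * U d p (box d n).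
Proof.
  intros n.
  pose proof Hp as Hp'. destruct Hp' as [Hp0 _].
  assert (HP : (0 < 2 ^ Z.of_nat n)%Z) by (apply Z.pow_pos_nonneg; lia).
  assert (HP2 : (2 ^ Z.of_nat (S n) = 2 * 2 ^ Z.of_nat n)%Z) by (rewrite Nat2Z.inj_succ, Z.pow_succ_r; lia).
  remember (2 ^ Z.of_nat n)%Z as P eqn:EP.
  set (Rn := map (fun i => Z.of_nat i - P)%Z (seq 0 (Z.to_nat (2 * P)))).
  assert (HsB : summable (fun x => box d n x /\ lattice d x) (fun x => green d p (repeat 0%Z d) x)).
  { exists (lsum (fun x => green d p (repeat 0%Z d) x) (lists_over Rn d)).
    intros s [l [Hn [Hf ->]]]. apply (lsum_incl (list_eq_dec Z.eq_dec)); auto.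
    - intros; apply green_nonneg; auto.
    - intros x Hx. rewrite Forall_forall in Hf. destruct (Hf x Hx) as [[Hl Hb] _]. apply lists_over_In; auto.
      rewrite Forall_forall in *. intros z Hz. specialize (Hb z Hz). rewrite <- EP in Hb. unfold Rn.
      apply in_map_iff. exists (Z.to_nat (z + P)). split; [lia|]. apply in_seq. lia. }
  unfold U. apply psum_lub_gen. intros l Hn Hf.
  rewrite Forall_forall in Hf.
  set (C := lists_over [0;1;2;3]%Z d).
  apply Rle_trans with (lsum (fun c => lsum (fun x => green d p (repeat 0%Z d) x)
     (filter (fun y => if list_eq_dec Z.eq_dec (cidx P y) c then true else false) l)) C).
  { apply (lsum_partition (list_eq_dec Z.eq_dec)).
    - intros; apply green_nonneg; auto.
    - intros x Hx. destruct (Hf x Hx) as [[Hl Hb] _]. unfold C. apply lists_over_In.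
      + unfold cidx. rewrite length_map; auto.
      + unfold cidx. rewrite Forall_forall in *. intros c Hc. apply in_map_iff in Hc.
        destruct Hc as [a [<- Ha]]. apply coord_idx; auto. specialize (Hb a Ha). lia. }
  apply Rle_trans with (lsum (fun _ => psum (fun x => box d n x /\ lattice d x) (fun x => green d p (repeat 0%Z d) x)) C).
  { apply lsum_le. intros c _. apply key; auto.
    - rewrite Forall_forall. intros x Hx. apply filter_In in Hx. apply Hf; tauto.
    - apply psum_nonneg. intros; apply green_nonneg; auto.
    - intros z Hz. rewrite <- (lsum_map (fun x => green d p (repeat 0%Z d) x) (fun y => vsub y z)).
      apply filter_In in Hz. destruct Hz as [Hz Ez].
      destruct (list_eq_dec Z.eq_dec (cidx P z) c) as [Ec|]; [|discriminate].
      destruct (Hf z Hz) as [[Lz Bz] _].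
      apply psum_ub; auto.
      + apply NoDup_map_NoDup_ForallPairs; [|apply NoDup_filter; auto].
        intros y y' Hy Hy' E. apply filter_In in Hy, Hy'.
        destruct (Hf y (proj1 Hy)) as [[Ly _] _]. destruct (Hf y' (proj1 Hy')) as [[Ly' _] _].
        apply vsub_inj with z; auto; unfold lattice in *; congruence.
      + rewrite Forall_forall. intros w Hw. apply in_map_iff in Hw. destruct Hw as [y [<- Hy]].
        apply filter_In in Hy. destruct Hy as [Hy Ey].
        destruct (list_eq_dec Z.eq_dec (cidx P y) c) as [Ecy|]; [|discriminate].
        destruct (Hf y Hy) as [[Ly By] _].
        assert (Lv : length (vsub y z) = d) by (rewrite vsub_length; unfold lattice in *; congruence).
        split; [split|]; auto.
        rewrite <- EP. rewrite HP2 in By, Bz.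
        apply piece_vsub; auto; [unfold lattice in *; congruence| congruence]. }
  rewrite lsum_const. unfold C. rewrite lists_over_length, pow_INR. simpl length.
  replace (INR 4) with 4 by (simpl; lra). lra.
Qed.
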